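(* Let $r\ge1$ and $k\ge1$ be integers. For any two states $\vec a,\vec b\in\mathcal H_{r,k}$, the Hanoi game on $\mathcal H_{r,k}$ transforms $\vec a$ into $\vec b$ in at most $2^k-1$ moves. The same holds for the Hanoi game on $\mathcal H^*_{r,k}$: for any $\vec a,\vec b\in\mathcal H^*_{r,k}$, $\vec a$ can be transformed into $\vec b$ in at most $2^k-1$ moves with all intermediate states in $\mathcal H^*_{r,k}$.
   Context: A Hanoi state is a finite sequence of nonnegative integers $\vec x=(x_1,\dots,x_k)$ with $x_i\ne x_{i-1}$ for all $i>1$. $\mathcal H_{r,k}$ is the set of Hanoi states in $\{0,1,\dots,r\}^k$, and $\mathcal H^*_{r,k}\subseteq\mathcal H_{r,k}$ is the set of proper Hanoi states, those with $x_1\ne0$. In the Hanoi game on $\mathcal H_{r,k}$ a state is transformed by moves of two types: (1) an adjustment changes $x_k$ to any other value in $\{0,1,\dots,r\}$ different from $x_{k-1}$ (if $k=1$, to any other value); (2) for $k\ge2$, an involution finds the longest final segment $(x_j,\dots,x_k)$ of $\vec x$ on which the entries alternate between the values $x_k$ and $x_{k-1}$, and swaps the values $x_k$ and $x_{k-1}$ throughout that segment (e.g. $(1,2,3,4)\mapsto(1,2,4,3)$, $(1,2,1,2)\mapsto(2,1,2,1)$). The Hanoi game on $\mathcal H^*_{r,k}$ is the same but all states involved must be proper (moves that would make $x_1=0$ are forbidden). *)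

(* Defs.v *)
From mathcomp Require Import all_boot.
Set Implicit Arguments. Unset Strict Implicit. Unset Printing Implicit Defensive.

Definition hanoi_state (r k : nat) (x : seq nat) : bool :=
  [&& size x == k, all (fun v => v <= r) x & sorted (fun a b => a != b) x].

Definition proper_state (r k : nat) (x : seq nat) : bool :=
  hanoi_state r k x && (head 0 x != 0).

(* Applied to rev x with p = x_k, q = x_{k-1}, this swaps x_k and x_{k-1}
   on the longest final segment alternating between them. *)
Fixpoint swap_alt (p q : nat) (s : seq nat) : seq nat :=
  match s with
  | y :: s' => if y == p then q :: swap_alt q p s' else s
  | [::] => [::]
  end.

Definition involution (x : seq nat) : seq nat :=
  match rev x with
  | a :: b :: _ => rev (swap_alt a b (rev x))
  | _ => x
  end.

Definition adjustment (r : nat) (x y : seq nat) : Prop :=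
  exists s a v, [/\ x = rcons s a, y = rcons s v, v <= r, v != a
                  & (s = [::] \/ v != last 0 s)].

Definition hanoi_move (r : nat) (x y : seq nat) : Prop :=
  adjustment r x y \/ (2 <= size x /\ y = involution x).

Definition game_step (r k : nat) (x y : seq nat) : Prop :=
  [/\ hanoi_state r k x, hanoi_state r k y & hanoi_move r x y].

Definition proper_game_step (r k : nat) (x y : seq nat) : Prop :=
  [/\ proper_state r k x, proper_state r k y & hanoi_move r x y].

Inductive nsteps (T : Type) (R : T -> T -> Prop) : nat -> T -> T -> Prop :=
  | nsteps0 x : nsteps R 0 x x
  | nstepsS m x y z : R x y -> nsteps R m y z -> nsteps R m.+1 x z.

(* Main.v *)
Require Import Defs.
From mathcomp Require Import all_boot.

Lemma head_rev (x0 : nat) s : head x0 (rev s) = last x0 s.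
Proof. by case/lastP: s => // s y; rewrite rev_rcons last_rcons. Qed.

Lemma size_swap_alt p q s : size (swap_alt p q s) = size s.
Proof. by elim: s p q => //= y s IH p q; case: ifP => //= _; rewrite IH. Qed.

Lemma swap_rcons s p q a : exists b, swap_alt p q (rcons s a) = rcons (swap_alt p q s) b
   /\ (b = a \/ last p (swap_alt p q s) = a).
Proof.
elim: s p q => [|y s IH] p q /=.
  case: eqP => [->|_]; [by exists q; split => //; right|by exists a; split => //; left].
case: eqP => [_|_]; last by exists a; split => //; left.
have [b [-> H]] := IH q p; exists b; split => //.
Qed.

Lemma hs_cons r k a x : size x = k.+1 ->
  hanoi_state r k.+2 (a::x) = [&& a <= r, head 0 x != a & hanoi_state r k.+1 x].
Proof.
case: x => // y x' _; rewrite /hanoi_state /= !eqSS (eq_sym y a).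
case: (size x' == k); case: (a <= r); case: (a == y); rewrite ?andbF ?andbT //=.
Qed.
From mathcomp Require Import zify.

Definition inS r k c x := hanoi_state r k x && (head 0 x != c).
Definition stepS r k c x y := [/\ inS r k c x, inS r k c y & hanoi_move r x y].

Lemma size_hs r k x : hanoi_state r k x -> size x = k.
Proof. by case/and3P => /eqP. Qed.

Lemma invol_cons a x : 2 <= size x -> head 0 (involution x) != a ->
  involution (a :: x) = a :: involution x.
Proof.
rewrite /involution rev_cons -(size_rev x).
case: (rev x) => [|p [|q t]] //= _.
rewrite !eqxx.
have [b [-> H]] := swap_rcons t p q a.
have -> : [:: q, p & rcons (swap_alt p q t) b] = rcons [:: q, p & swap_alt p q t] b by [].
rewrite rev_rcons; case: H => [-> //|H].
rewrite head_rev /=; case: (swap_alt p q t) H => [|y s'] /= <-; by rewrite eqxx.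
Qed.

Lemma lift_step r k c a1 x y : a1 <= r -> a1 != c ->
  stepS r k.+1 a1 x y -> stepS r k.+2 c (a1 :: x) (a1 :: y).
Proof.
move=> ar ac [/andP [hx nx] /andP [hy ny] mv].
have sx := size_hs _ _ _ hx; have sy := size_hs _ _ _ hy.
split; rewrite /inS ?hs_cons //= ?ar ?hx ?hy ?ac ?(eq_sym a1) ?nx ?ny //.
case: mv => [[s [a [v [ex ey vr va sv]]]]|[s2 ey]].
  left; exists (a1 :: s), a, v; split; rewrite ?ex ?ey //; right.
  case: s ex ey sv => [|z s] ex ey sv /=; first by move: ny; rewrite ey /= eq_sym.
  by case: sv.
right; split; first by rewrite /= ltnW.
by rewrite ey invol_cons // -ey.
Qed.

Lemma nsteps_cat T (R : T -> T -> Prop) m1 m2 x y z :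
  nsteps R m1 x y -> nsteps R m2 y z -> nsteps R (m1 + m2) x z.
Proof. by elim=> [//|m x' y' z' H _ IH] /IH; apply: nstepsS. Qed.

Lemma nsteps_map T U (f : T -> U) (R : T -> T -> Prop) (R' : U -> U -> Prop) m x y :
  (forall x y, R x y -> R' (f x) (f y)) -> nsteps R m x y -> nsteps R' m (f x) (f y).
Proof. move=> H; elim=> [x'|m' x' y' z' Hs _ IH]; [constructor|exact: nstepsS (H _ _ Hs) IH]. Qed.
Arguments nsteps_map {T U} f {R R' m x y}.

Fixpoint alt (p q n : nat) : seq nat := if n is n'.+1 then p :: alt q p n' else [::].

Lemma size_alt p q n : size (alt p q n) = n.
Proof. by elim: n p q => //= n IH p q; rewrite IH. Qed.

Lemma alt_state r n p q : p <= r -> q <= r -> p != q -> hanoi_state r n.+1 (alt p q n.+1).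
Proof.
elim: n p q => [|n IH] p q pr qr pq; first by rewrite /hanoi_state /= pr.
rewrite [alt _ _ _]/= hs_cons ?size_alt //.
  by rewrite pr /= eq_sym pq /=; apply: (IH q p); rewrite // eq_sym.
by rewrite /= size_alt.
Qed.

Lemma rcons_alt p q n : rcons (alt p q n) (if odd n then q else p) = alt p q n.+1.
Proof. by elim: n p q => //= n IH p q; rewrite -IH; case: (odd n). Qed.

Lemma rev_alt p q n : rev (alt p q n) = if odd n then alt p q n else alt q p n.
Proof.
elim: n p q => // n IH p q; rewrite [alt p q _]/= rev_cons IH /=.
case E: (odd n) => /=.
  by have := rcons_alt q p n; rewrite E.
by have := rcons_alt p q n; rewrite E.
Qed.

Lemma swap_alt_alt p q n : swap_alt p q (alt p q n) = alt q p n.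
Proof. by elim: n p q => //= n IH p q; rewrite eqxx IH. Qed.

Lemma invol_alt p q n : involution (alt p q n.+2) = alt q p n.+2.
Proof.
rewrite /involution rev_alt; case E: (odd n.+2).
  rewrite [alt p q n.+2]/= /= !eqxx swap_alt_alt.
  by rewrite -[q :: p :: _]/(alt q p n.+2) rev_alt E.
rewrite [alt q p n.+2]/= /= !eqxx swap_alt_alt.
by rewrite -[p :: q :: _]/(alt p q n.+2) rev_alt E.
Qed.

Lemma main r k : forall c a b, inS r k.+1 c a -> inS r k.+1 c b ->
  exists2 m, m <= 2 ^ k.+1 - 1 & nsteps (stepS r k.+1 c) m a b.
Proof.
elim: k => [|k IH] c a b ha hb.
  move: (size_hs _ _ _ (andP ha).1) (size_hs _ _ _ (andP hb).1).
  case: a ha => [|a1 [|]] //; case: b hb => [|b1 [|]] // hb ha _ _.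
  case: (eqVneq a1 b1) => [<-|neq]; first by exists 0 => //; constructor.
  exists 1 => //; apply: nstepsS; last by constructor.
  split => //; left; exists [::], a1, b1; split; rewrite // ?(eq_sym b1) //.
  by case/andP: hb => /and3P [_ /andP [] ].
  by left.
have hsa := size_hs _ _ _ (andP ha).1; have hsb := size_hs _ _ _ (andP hb).1.
case: a ha hsa => [|a1 a'] // ha [sa'].
case: b hb hsb => [|b1 b'] // hb [sb'].
move: ha; rewrite /inS hs_cons // => /andP [/and3P [a1r na' ha'] /= a1c].
move: hb; rewrite /inS hs_cons // => /andP [/and3P [b1r nb' hb'] /= b1c].
have ia : inS r k.+1 a1 a' by rewrite /inS ha' na'.
have ib : inS r k.+1 b1 b' by rewrite /inS hb' nb'.
case: (eqVneq a1 b1) => [eab|neq].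
  subst b1; have [m hm st] := IH a1 a' b' ia ib.
  exists m; first by move: hm; rewrite (expnS 2 k.+1); lia.
  by apply: (nsteps_map (cons a1)) st => x y; exact: lift_step.
have iz : inS r k.+1 a1 (alt b1 a1 k.+1) by rewrite /inS alt_state //= eq_sym.
have iz2 : inS r k.+1 b1 (alt a1 b1 k.+1) by rewrite /inS alt_state //= eq_sym.
have [m1 hm1 st1] := IH a1 a' _ ia iz.
have [m2 hm2 st2] := IH b1 _ b' iz2 ib.
exists (m1 + (1 + m2)); first by move: hm1 hm2; rewrite (expnS 2 k.+1); lia.
apply: nsteps_cat (nsteps_map (cons a1) _ st1) _.
  by move=> x y; exact: lift_step.
apply: nstepsS; last first.
  by apply: (nsteps_map (cons b1)) st2 => x y; exact: lift_step.
split.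
- by rewrite /inS -[a1 :: _]/(alt a1 b1 k.+2) alt_state.
- by rewrite /inS -[b1 :: _]/(alt b1 a1 k.+2) alt_state // eq_sym.
right; split; first by rewrite /= size_alt.
by rewrite -[a1 :: _]/(alt a1 b1 k.+2) invol_alt.
Qed.

Theorem lemma5 (r k : nat) (hr : 1 <= r) (hk : 1 <= k) :
  (forall a b : seq nat, hanoi_state r k a -> hanoi_state r k b ->
     exists2 m, m <= 2 ^ k - 1 & nsteps (game_step r k) m a b) /\
  (forall a b : seq nat, proper_state r k a -> proper_state r k b ->
     exists2 m, m <= 2 ^ k - 1 & nsteps (proper_game_step r k) m a b).
Proof.
case: k hk => // k _.
have hd : forall a, hanoi_state r k.+1 a -> inS r k.+1 r.+1 a.
  move=> a ha; rewrite /inS ha /=.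
  by case: a ha => //= x s /and3P [_ /andP [xr _] _]; rewrite neq_ltn ltnS xr.
split => a b ha hb; last exact: main _ _ _ _ _ ha hb.
have [m hm st] := main _ _ _ _ _ (hd _ ha) (hd _ hb).
exists m => //; apply: (nsteps_map id) st => x y [/andP [hx _] /andP [hy _] mv].
by split.
Qed.
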